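(* The number of bars of a barcode $f$, which equals $n = f|_{(x,y)=(1,1)}$, can be determined from $C^{\wedge}(f)$: if $f, f'$ are barcodes with $C^{\wedge}(f) = C^{\wedge}(f')$, then $f$ and $f'$ have the same number of bars.
   Context: A barcode is a finite formal sum $f = \sum_{i=1}^n x^{\alpha_i}y^{\ell_i}$ with $n\ge 0$, $\alpha_i \in \mathbb{R}$, $\ell_i \in \mathbb{R}_{>0}$ (a finite multiset of bars $x^{\alpha_i}y^{\ell_i}$); its number of bars is $n$. Its $p$-th exterior power ($p\ge1$) is $f^{\wedge p} = \sum_{1\le i_1<\cdots<i_p\le n} x^{\alpha_{i_1}+\cdots+\alpha_{i_p}}y^{\min\{\ell_{i_1},\ldots,\ell_{i_p}\}}$ (zero if $p>n$). Set $C(f) = \sum_i x^{\alpha_i} - \sum_i x^{\alpha_i+\ell_i}$, a finite integer combination of symbols $x^g$, $g\in\mathbb{R}$, and $C^{\wedge}(f) = \sum_{p\ge1} C(f^{\wedge p})z^p$ with $z$ an indeterminate. *)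

(* Defs.v *)
From HB Require Import structures.
From mathcomp Require Import all_boot all_order all_algebra.
From mathcomp Require Import reals.
Set Implicit Arguments. Unset Strict Implicit. Unset Printing Implicit Defensive.
Import Order.TTheory GRing.Theory Num.Theory.
Local Open Scope ring_scope.

(* A barcode sum_i x^{alpha_i} y^{ell_i} is represented by the finite
   multiset (list, order irrelevant) of its bars (alpha_i, ell_i). *)
Definition barcode (R : realType) := seq (R * R).

Definition is_barcode (R : realType) (f : barcode R) : bool :=
  all (fun b => 0 < b.2) f.

Definition nbars (R : realType) (f : barcode R) : nat := size f.

(* minimum of a nonempty list (0 on the empty list, never used) *)
Definition seqmin (R : realType) (s : seq R) : R :=
  if s is x :: s' then foldr Num.min x s' else 0.

(* p-th exterior power: one bar x^{sum_{i in S} alpha_i} y^{min_{i in S} ell_i}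
   for each p-element subset S of the indices of bars. *)
Definition ext_pow (R : realType) (f : barcode R) (p : nat) : barcode R :=
  [seq (\sum_(i in A) (nth (0, 0) f (nat_of_ord i)).1,
        seqmin [seq (nth (0, 0) f (nat_of_ord i)).2 | i <- enum A])
  | A : {set 'I_(size f)} <- enum [set A : {set 'I_(size f)} | #|A| == p]].

(* C(f) = sum_i x^{alpha_i} - sum_i x^{alpha_i + ell_i}, as its coefficient
   function g |-> coefficient of x^g (an integer). *)
Definition Ccoef (R : realType) (f : barcode R) (g : R) : int :=
  (count (fun b => b.1 == g) f)%:Z - (count (fun b => b.1 + b.2 == g) f)%:Z.

(* C^wedge(f) = sum_{p>=1} C(f^{wedge p}) z^p : coefficient of z^p x^g. *)
Definition Cwedge (R : realType) (f : barcode R) (p : nat) (g : R) : int :=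
  Ccoef (ext_pow f p) g.

(* Main.v *)
Require Import Defs.
From mathcomp Require Import all_boot all_order all_algebra.
From mathcomp Require Import reals.
Import Order.TTheory GRing.Theory Num.Theory.

Section Aux.
Local Open Scope ring_scope.
Variable R : realType.

Lemma foldr_min_pos (x : R) (s : seq R) :
  0 < x -> all (fun y => 0 < y) s -> 0 < foldr Num.min x s.
Proof.
move=> hx; elim: s => [|y s IH] //= /andP[hy hs].
by rewrite lt_min hy IH.
Qed.

Lemma seqmin_pos (s : seq R) :
  s != [::] -> all (fun y => 0 < y) s -> 0 < seqmin s.
Proof.
case: s => [//|x s] _ /= /andP[hx hs]; exact: foldr_min_pos.
Qed.

Lemma exists_min_bar (h : barcode R) : h != [::] ->
  exists2 b, b \in h & forall c, c \in h -> b.1 <= c.1.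
Proof.
elim: h => [//|a h IH] _.
case: (altP (h =P [::])) => [->|hn].
  by exists a; rewrite ?mem_seq1 // => c; rewrite mem_seq1 => /eqP->.
have [b bh bmin] := IH hn.
case: (leP a.1 b.1) => hab.
  exists a; first by rewrite inE eqxx.
  move=> c; rewrite inE => /orP[/eqP->//|ch]; exact: le_trans hab (bmin _ ch).
exists b; first by rewrite inE bh orbT.
move=> c; rewrite inE => /orP[/eqP->|ch]; [exact: ltW|exact: bmin].
Qed.

Lemma Ccoef_nonzero (h : barcode R) : is_barcode h -> h != [::] ->
  exists g, Ccoef h g != 0.
Proof.
move=> hb hn; have [b bh bmin] := @exists_min_bar h hn.
exists b.1; rewrite /Ccoef.
have -> : count (fun c => c.1 + c.2 == b.1) h = 0%N.
  apply/eqP; rewrite -leqn0 leqNgt -has_count; apply/hasPn => c ch.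
  have := allP hb c ch => /= hc.
  apply/negP => /eqP e.
  have := bmin c ch; rewrite -e => hle.
  have : c.1 < c.1 + c.2 by rewrite ltrDl.
  by rewrite ltNge hle.
rewrite subr0 eqz_nat -lt0n -has_count; apply/hasP; exists b => //.
Qed.

Lemma ext_pow_barcode (f : barcode R) p : (0 < p)%N -> is_barcode f ->
  is_barcode (ext_pow f p).
Proof.
move=> hp hf; apply/allP => b /mapP [A]; rewrite mem_enum inE => /eqP hA -> /=.
apply: seqmin_pos.
  rewrite -size_eq0 size_map -cardE hA; by rewrite -lt0n.
apply/allP => y /mapP [i _ ->]; apply: (allP hf); apply: mem_nth; exact: ltn_ord.
Qed.

Lemma ext_pow_size (f : barcode R) p :
  size (ext_pow f p) = #|[set A : {set 'I_(size f)} | #|A| == p]|.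
Proof. by rewrite size_map cardE. Qed.

Lemma ext_pow_nil (f : barcode R) p : (size f < p)%N -> ext_pow f p = [::].
Proof.
move=> hp; apply/eqP; rewrite -size_eq0 ext_pow_size cards_eq0.
apply/eqP/setP => A; rewrite !inE; apply/negbTE.
apply/negP => /eqP hA.
have := max_card A; rewrite card_ord hA => h.
by move: (leq_ltn_trans h hp); rewrite ltnn.
Qed.

Lemma ext_pow_nonnil (f : barcode R) p : (p <= size f)%N -> ext_pow f p != [::].
Proof.
move=> hp; rewrite -size_eq0 ext_pow_size cards_eq0.
apply/set0Pn; exists [set i : 'I_(size f) | (i < p)%N]; rewrite inE.
have -> : [set i : 'I_(size f) | (i < p)%N] =
          [set widen_ord hp j | j : 'I_p].
  apply/setP => i; rewrite !inE; apply/idP/imsetP.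
    by move=> hi; exists (Ordinal hi) => //; apply: val_inj.
  by case=> j _ ->; rewrite /= ltn_ord.
rewrite card_imset ?card_ord //.
by move=> x y /(congr1 val) /= e; apply: val_inj.
Qed.

Lemma key (f f' : barcode R) : is_barcode f' ->
  (forall (p : nat) (g : R), (0 < p)%N -> Cwedge f p g = Cwedge f' p g) ->
  (size f < size f')%N -> False.
Proof.
move=> hf' hC hlt.
have hp : (0 < size f')%N by apply: leq_ltn_trans hlt.
have [g hg] := @Ccoef_nonzero _ (@ext_pow_barcode f' _ hp hf') (@ext_pow_nonnil f' _ (leqnn _)).
move: (hC _ g hp); rewrite /Cwedge (@ext_pow_nil f _ hlt) /Ccoef /= subrr => e.
by move: hg; rewrite /Ccoef -e eqxx.
Qed.

End Aux.

Theorem proposition8 (R : realType) (f f' : barcode R) :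
  is_barcode f -> is_barcode f' ->
  (forall (p : nat) (g : R), (0 < p)%N -> Cwedge f p g = Cwedge f' p g) ->
  nbars f = nbars f'.
Proof.
move=> hf hf' hC; rewrite /nbars.
case: (ltngtP (size f) (size f')) => // h.
  by case: (@key R f f' hf' hC h).
by case: (@key R f' f hf (fun p g hp => esym (hC p g hp)) h).
Qed.
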